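(* For all processes $s,t$, $D_{\mathcal{L}}(s,t)=0$ if and only if $s$ and $t$ are strong probabilistic trace equivalent.
   Context: PTS $(\mathcal{S},A,\to)$ with finitely supported distributions; processes image-finite and finite. Computations $c=s_0\xrightarrow{a_1}\cdots\xrightarrow{a_n}s_n$ via transitions $s_{i-1}\xrightarrow{a_i}\pi_i$, $s_i\in\mathrm{supp}(\pi_i)$; $\Pr(c)=\prod\pi_i(s_i)$ (empty: 1); $|c|=n$; $\mathrm{tr}(c)=a_1\cdots a_n$; $\mathcal{C}(z,\alpha)$ computations from $z$ with trace $\alpha$; maximal = not a proper prefix of another computation from the same process; $\mathcal{C}_{\max}(z)$; $\Pr$ of a set is the sum. A resolution of $s$ is a PTS $\mathcal{Z}=(Z,A,\to_{\mathcal{Z}})$ with $\mathrm{corr}\colon Z\to\mathcal{S}$ and initial state $z_s$, $\mathrm{corr}(z_s)=s$, such that $z_s$ is in no target support, every other state is in the support of a target of a transition from a different state, every $z\xrightarrow{a}_{\mathcal{Z}}\pi$ is matched by $\mathrm{corr}(z)\xrightarrow{a}\pi'$ with $\pi(z')=\pi'(\mathrm{corr}(z'))$, and each state has at most one outgoing transition; $\mathrm{res}(s)$ the set of resolutions. $s,t$ are strong probabilistic trace equivalent iff for each $\mathcal{Z}_s\in\mathrm{res}(s)$ there is $\mathcal{Z}_t\in\mathrm{res}(t)$ with $\Pr(\mathcal{C}(z_s,\alpha))=\Pr(\mathcal{C}(z_t,\alpha))$ for all $\alpha\in A^\star$, and symmetrically. Logic $\mathcal{L}$: trace formulae $\Phi::=\top\mid\langle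 a\rangle\Phi$, $\mathrm{depth}(\top)=0$, $\mathrm{depth}(\langle a\rangle\Phi)=1+\mathrm{depth}(\Phi)$; trace distribution formulae $\bigoplus_{i\in I}r_i\Phi_i$ ($I$ finite nonempty, $\Phi_i$ pairwise distinct, $r_i\in(0,1]$, $\sum r_i=1$), identified with distributions on trace formulae. $c\models\top$ always; $c\models\langle a\rangle\Phi$ iff $c=s\xrightarrow{a}c'$ with $c'\models\Phi$. $s\models\bigoplus_i r_i\Phi_i$ iff some $\mathcal{Z}\in\mathrm{res}(s)$ with initial state $z$ satisfies $\Pr(\{c\in\mathcal{C}_{\max}(z):c\models\Phi_i,|c|=\mathrm{depth}(\Phi_i)\})=r_i$ for all $i$; $\mathcal{L}(s)$ the set of formulae satisfied by $s$. $d(\Phi_1,\Phi_2)=0$ if equal, else $1$; $D(\Psi_1,\Psi_2)=\min_\omega\sum\omega(\Phi,\Phi')d(\Phi,\Phi')$ over couplings $\omega$ of $\Psi_1,\Psi_2$. Hausdorff lifting: $\mathcal{H}(D)(X,Y)=\max\{\sup_{x\in X}\inf_{y\in Y}D(x,y),\sup_{y\in Y}\inf_{x\in X}D(y,x)\}$ ($\inf\emptyset=1$, $\sup\emptyset=0$). $D_{\mathcal{L}}(s,t)=\mathcal{H}(D)(\mathcal{L}(s),\mathcal{L}(t))$. *)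

(* Defs.v *)
From Stdlib Require Import Reals List Classical ClassicalEpsilon.
Import ListNotations.
Open Scope R_scope.
Set Implicit Arguments.

(* Sum of f over a set C, when C is finite (enumerated by a duplicate-free list);
   0 otherwise (never used in that case). *)
Definition set_sum {T : Type} (C : T -> Prop) (f : T -> R) : R :=
  match excluded_middle_informative
          (exists L : list T, NoDup L /\ forall x, In x L <-> C x) with
  | left H =>
      fold_right (fun x acc => f x + acc) 0
        (proj1_sig (constructive_indefinite_description _ H))
  | right _ => 0
  end.

Definition Rsup (E : R -> Prop) (dflt : R) : R :=
  match excluded_middle_informative (exists l, is_lub E l) with
  | left H => proj1_sig (constructive_indefinite_description _ H)
  | right _ => dflt
  end.

Definition Rinf (E : R -> Prop) (dflt : R) : R :=
  match excluded_middle_informative (exists l, is_lub (fun x => E (- x)) l) with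
  | left H => - proj1_sig (constructive_indefinite_description _ H)
  | right _ => dflt
  end.

Definition is_fdist {T : Type} (pi : T -> R) : Prop :=
  (forall x, 0 <= pi x) /\
  exists L : list T, NoDup L /\ (forall x, pi x <> 0 -> In x L) /\
    fold_right (fun x acc => pi x + acc) 0 L = 1.

Definition trans (X A : Type) := X -> A -> (X -> R) -> Prop.

Definition is_PTS {X A : Type} (st : trans X A) : Prop :=
  forall s a pi, st s a pi -> is_fdist pi.

Definition image_finite {X A : Type} (st : trans X A) : Prop :=
  forall s a, exists L : list (X -> R), forall pi, st s a pi -> In pi L.

(* a computation from s is the list of its steps (a_i, pi_i, s_i) *)
Definition comp (X A : Type) := list (A * (X -> R) * X).

Fixpoint valid_from {X A : Type} (st : trans X A) (s : X) (c : comp X A) : Prop :=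
  match c with
  | [] => True
  | (a, pi, s') :: c' => st s a pi /\ 0 < pi s' /\ valid_from st s' c'
  end.

Fixpoint comp_pr {X A : Type} (c : comp X A) : R :=
  match c with
  | [] => 1
  | (_, pi, s') :: c' => pi s' * comp_pr c'
  end.

Definition comp_tr {X A : Type} (c : comp X A) : list A :=
  map (fun p => fst (fst p)) c.

Definition maximal_from {X A : Type} (st : trans X A) (s : X) (c : comp X A) : Prop :=
  valid_from st s c /\
  ~ exists ext : comp X A, ext <> [] /\ valid_from st s (c ++ ext).

Definition finite_proc {X A : Type} (st : trans X A) (s : X) : Prop :=
  exists N : nat, forall c, valid_from st s c -> (length c <= N)%nat.

Record resolution {S A : Type} (st : trans S A) (s : S) := {
  rZ : Type;
  rstep : trans rZ A;
  rcorr : rZ -> S;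
  rinit : rZ;
  r_pts : is_PTS rstep;
  r_corr_init : rcorr rinit = s;
  r_init_fresh : forall z a pi, rstep z a pi -> ~ (0 < pi rinit);
  r_reach : forall z, z <> rinit ->
     exists z' a pi, z' <> z /\ rstep z' a pi /\ 0 < pi z;
  r_match : forall z a pi, rstep z a pi ->
     exists pi', st (rcorr z) a pi' /\ forall z', pi z' = pi' (rcorr z');
  r_det : forall z a1 pi1 a2 pi2,
     rstep z a1 pi1 -> rstep z a2 pi2 -> a1 = a2 /\ pi1 = pi2
}.

Arguments rZ {S A st s}.
Arguments rstep {S A st s}.
Arguments rcorr {S A st s}.
Arguments rinit {S A st s}.

Definition Pr_trace {S A : Type} {st : trans S A} {s : S}
  (Z : resolution st s) (alpha : list A) : R :=
  set_sum (fun c : comp (rZ Z) A => valid_from (rstep Z) (rinit Z) c /\ comp_tr c = alpha)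
          comp_pr.

Definition ptrace_equiv {S A : Type} (st : trans S A) (s t : S) : Prop :=
  (forall Zs : resolution st s, exists Zt : resolution st t,
      forall alpha, Pr_trace Zs alpha = Pr_trace Zt alpha) /\
  (forall Zt : resolution st t, exists Zs : resolution st s,
      forall alpha, Pr_trace Zt alpha = Pr_trace Zs alpha).

Inductive tformula (A : Type) : Type :=
| TTop : tformula A
| TDiam : A -> tformula A -> tformula A.
Arguments TTop {A}.

Fixpoint depth {A} (f : tformula A) : nat :=
  match f with TTop => O | TDiam _ f' => S (depth f') end.

Fixpoint csat {X A : Type} (c : comp X A) (f : tformula A) : Prop :=
  match f with
  | TTop => True
  | TDiam a f' =>
      match c with
      | [] => False
      | (b, _, _) :: c' => b = a /\ csat c' f'
      end
  end.

(* trace distribution formulae = finitely supported distributions on trace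
   formulae: (+)_{i in I} r_i Phi_i with I the support *)
Definition tdformula (A : Type) := tformula A -> R.

Definition is_tdf {A} (Psi : tdformula A) : Prop := is_fdist Psi.

Definition sat_state {S A : Type} (st : trans S A) (s : S) (Psi : tdformula A) : Prop :=
  exists Z : resolution st s, forall Phi, 0 < Psi Phi ->
    set_sum (fun c : comp (rZ Z) A =>
               maximal_from (rstep Z) (rinit Z) c /\ csat c Phi /\ length c = depth Phi)
            comp_pr = Psi Phi.

Definition Lset {S A : Type} (st : trans S A) (s : S) : tdformula A -> Prop :=
  fun Psi => is_tdf Psi /\ sat_state st s Psi.

Definition dtf {A} (p : tformula A * tformula A) : R :=
  if excluded_middle_informative (fst p = snd p) then 0 else 1.

Definition coupling {A} (Psi1 Psi2 : tdformula A)
    (w : tformula A * tformula A -> R) : Prop :=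
  is_fdist w /\
  (forall Phi, set_sum (fun p => fst p = Phi /\ w p <> 0) w = Psi1 Phi) /\
  (forall Phi, set_sum (fun p => snd p = Phi /\ w p <> 0) w = Psi2 Phi).

Definition Dtdf {A} (Psi1 Psi2 : tdformula A) : R :=
  Rinf (fun r => exists w, coupling Psi1 Psi2 w /\
                   r = set_sum (fun p => w p <> 0) (fun p => w p * dtf p)) 1.

Definition Hlift {T : Type} (D : T -> T -> R) (X Y : T -> Prop) : R :=
  Rmax (Rsup (fun r => exists x, X x /\ r = Rinf (fun r' => exists y, Y y /\ r' = D x y) 1) 0)
       (Rsup (fun r => exists y, Y y /\ r = Rinf (fun r' => exists x, X x /\ r' = D y x) 1) 0).

Definition DL {S A : Type} (st : trans S A) (s t : S) : R :=
  Hlift Dtdf (Lset st s) (Lset st t).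

(* Main.v *)
From Stdlib Require Import Reals List Classical ClassicalEpsilon Permutation Lra Lia ZArith.
Require Import Defs.
Import ListNotations.
Open Scope R_scope.


Definition lsum {T : Type} (f : T -> R) (L : list T) : R :=
  fold_right (fun x acc => f x + acc) 0 L.

Definition dec (P : Prop) : bool := if excluded_middle_informative P then true else false.

Lemma dec_true (P : Prop) : dec P = true <-> P.
Proof. unfold dec; destruct (excluded_middle_informative P); split; intros; auto; discriminate. Qed.

Lemma dec_false (P : Prop) : dec P = false <-> ~ P.
Proof. unfold dec; destruct (excluded_middle_informative P); split; intros; auto; try discriminate; contradiction. Qed.

Lemma lsum_nil {T} (f : T -> R) : lsum f [] = 0.
Proof. reflexivity. Qed.
Lemma lsum_cons {T} (f : T -> R) x L : lsum f (x :: L) = f x + lsum f L.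
Proof. reflexivity. Qed.

Lemma lsum_app {T} (f : T -> R) L1 L2 : lsum f (L1 ++ L2) = lsum f L1 + lsum f L2.
Proof. induction L1; simpl; [lra|]. unfold lsum in *; simpl. rewrite IHL1. lra. Qed.

Lemma lsum_perm {T} (f : T -> R) L1 L2 : Permutation L1 L2 -> lsum f L1 = lsum f L2.
Proof. induction 1; unfold lsum in *; simpl; try lra. Qed.

Lemma lsum_ext {T} (f g : T -> R) L : (forall x, In x L -> f x = g x) -> lsum f L = lsum g L.
Proof. induction L; intros H; simpl; auto. unfold lsum in *; simpl. rewrite H by (left; auto). rewrite IHL; auto. intros; apply H; right; auto. Qed.

Lemma lsum_nonneg {T} (f : T -> R) L : (forall x, In x L -> 0 <= f x) -> 0 <= lsum f L.
Proof. induction L; intros H; unfold lsum in *; simpl; [lra|]. assert (0 <= f a) by (apply H; left; auto). assert (0 <= fold_right (fun x acc => f x + acc) 0 L) by (apply IHL; intros; apply H; right; auto). lra. Qed.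

Lemma lsum_le {T} (f g : T -> R) L : (forall x, In x L -> f x <= g x) -> lsum f L <= lsum g L.
Proof. induction L; intros H; unfold lsum in *; simpl; [lra|]. assert (f a <= g a) by (apply H; left; auto). assert (fold_right (fun x acc => f x + acc) 0 L <= fold_right (fun x acc => g x + acc) 0 L) by (apply IHL; intros; apply H; right; auto). lra. Qed.

Lemma lsum_scal {T} (f : T -> R) c L : lsum (fun x => c * f x) L = c * lsum f L.
Proof. induction L; unfold lsum in *; simpl; [lra|]. rewrite IHL. lra. Qed.

Lemma lsum_plus {T} (f g : T -> R) L : lsum (fun x => f x + g x) L = lsum f L + lsum g L.
Proof. induction L; unfold lsum in *; simpl; [lra|]. rewrite IHL. lra. Qed.

Lemma lsum_map {T U} (f : U -> R) (h : T -> U) L : lsum f (map h L) = lsum (fun x => f (h x)) L.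
Proof. induction L; unfold lsum in *; simpl; auto. rewrite IHL; auto. Qed.

Lemma lsum_flat_map {T U} (f : U -> R) (h : T -> list U) L :
  lsum f (flat_map h L) = lsum (fun x => lsum f (h x)) L.
Proof. induction L; simpl; auto. rewrite lsum_app, IHL. reflexivity. Qed.

Lemma lsum_zero {T} (f : T -> R) L : (forall x, In x L -> f x = 0) -> lsum f L = 0.
Proof. intros H. rewrite (lsum_ext f (fun _ => 0)) by auto. induction L; unfold lsum in *; simpl; auto. rewrite IHL; [lra|]. intros; apply H; right; auto. Qed.

Lemma lsum_comm {T U} (f : T -> U -> R) L1 L2 :
  lsum (fun x => lsum (fun y => f x y) L2) L1 = lsum (fun y => lsum (fun x => f x y) L1) L2.
Proof. induction L1.
 - rewrite lsum_nil. rewrite lsum_zero; auto.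
 - rewrite lsum_cons, IHL1.
   rewrite (lsum_ext (fun y => lsum (fun x => f x y) (a :: L1)) (fun y => f a y + lsum (fun x => f x y) L1)) by (intros; rewrite lsum_cons; reflexivity).
   rewrite lsum_plus. reflexivity. Qed.

Lemma lsum_filter_split {T} (f : T -> R) (P : T -> bool) L :
  lsum f L = lsum f (filter P L) + lsum f (filter (fun x => negb (P x)) L).
Proof. induction L; simpl; [unfold lsum; simpl; lra|]. destruct (P a); simpl; unfold lsum in *; simpl; rewrite IHL; lra. Qed.

Lemma lsum_filter_zero {T} (f : T -> R) (P : T -> bool) L :
  (forall x, In x L -> P x = false -> f x = 0) -> lsum f (filter P L) = lsum f L.
Proof. intros H. rewrite (lsum_filter_split f P L). rewrite (lsum_zero f (filter (fun x => negb (P x)) L)). lra.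
 intros x Hx. apply filter_In in Hx. destruct Hx as [H1 H2]. apply H; auto. destruct (P x); auto. Qed.

Lemma lsum_const {T} c (L : list T) : lsum (fun _ => c) L = INR (length L) * c.
Proof. induction L. unfold lsum; simpl; lra. rewrite lsum_cons, IHL. change (length (a :: L)) with (S (length L)). rewrite S_INR. lra. Qed.

Lemma lsum_sub_le {T} (f : T -> R) (L1 L2 : list T) :
  NoDup L1 -> NoDup L2 -> (forall x, In x L2 -> 0 <= f x) ->
  (forall x, In x L1 -> f x <> 0 -> In x L2) -> (forall x, In x L1 -> 0 <= f x) ->
  lsum f L1 <= lsum f L2.
Proof.
  revert L2; induction L1 as [|a L1 IH]; intros L2 N1 N2 P2 Inc P1.
  - simpl. apply lsum_nonneg; auto.
  - inversion N1; subst. rewrite lsum_cons.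
    destruct (Req_dec (f a) 0) as [E|E].
    + rewrite E. rewrite Rplus_0_l. apply IH; auto. intros x Hx Hf; apply Inc; auto; right; auto.
      intros; apply P1; right; auto.
    + assert (Ha : In a L2) by (apply Inc; auto; left; auto).
      destruct (in_split _ _ Ha) as [l1 [l2 El]]. subst L2.
      assert (Pm : Permutation (l1 ++ a :: l2) (a :: l1 ++ l2)) by (symmetry; apply Permutation_middle).
      rewrite (lsum_perm f _ _ Pm). rewrite lsum_cons.
      apply Rplus_le_compat_l. apply IH; auto.
      * apply NoDup_remove_1 with a; auto.
      * intros x Hx; apply P2. apply in_app_or in Hx; apply in_or_app; destruct Hx; [left|right;right]; auto.
      * intros x Hx Hf. assert (Hx2 := Inc x (or_intror Hx) Hf).
        apply in_app_or in Hx2; destruct Hx2 as [H|[H|H]]; try (apply in_or_app; auto).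
        subst; contradiction.
      * intros; apply P1; right; auto.
Qed.

Lemma set_sum_list {T} (C : T -> Prop) (f : T -> R) (L : list T) :
  NoDup L -> (forall x, In x L <-> C x) -> set_sum C f = lsum f L.
Proof.
  intros N H. unfold set_sum. destruct excluded_middle_informative as [e|n].
  - destruct (constructive_indefinite_description _ e) as [L' [N' H']]. simpl.
    apply (lsum_perm f). apply NoDup_Permutation; auto. intros x; rewrite H, H'; tauto.
  - exfalso; apply n; exists L; auto.
Qed.

Lemma set_sum_filter {T} (C : T -> Prop) (f : T -> R) (L : list T) :
  NoDup L -> (forall x, C x -> In x L) ->
  set_sum C f = lsum f (filter (fun x => dec (C x)) L).
Proof. intros N H. apply set_sum_list. apply NoDup_filter; auto.
  intros x; rewrite filter_In, dec_true. split; [tauto| intros; split; auto]. Qed.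

Lemma fdist_le1 {T} (pi : T -> R) x : is_fdist pi -> pi x <= 1.
Proof. intros [Hn [L [N [Hc Hs]]]]. destruct (Req_dec (pi x) 0) as [E|E]. lra.
  assert (Hx := Hc x E). destruct (in_split _ _ Hx) as [l1 [l2 El]]; subst.
  change (lsum pi (l1 ++ x :: l2) = 1) in Hs. rewrite lsum_app, lsum_cons in Hs.
  assert (0 <= lsum pi l1) by (apply lsum_nonneg; auto). assert (0 <= lsum pi l2) by (apply lsum_nonneg; auto). lra. Qed.


Definition is_det {X A : Type} (step : trans X A) : Prop :=
  forall z a1 pi1 a2 pi2, step z a1 pi1 -> step z a2 pi2 -> a1 = a2 /\ pi1 = pi2.

Definition nxt {X A : Type} (step : trans X A) (z : X) : option (A * (X -> R)) :=
  match excluded_middle_informative (exists p : A * (X -> R), step z (fst p) (snd p)) with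
  | left H => Some (proj1_sig (constructive_indefinite_description _ H))
  | right _ => None
  end.

Lemma nxt_some {X A} (step : trans X A) z a pi : nxt step z = Some (a, pi) -> step z a pi.
Proof. unfold nxt. destruct excluded_middle_informative as [e|n]; [|discriminate].
  destruct (constructive_indefinite_description _ e) as [p Hp]; simpl. intros E; inversion E; subst; auto. Qed.

Lemma nxt_none {X A} (step : trans X A) z : nxt step z = None -> forall a pi, ~ step z a pi.
Proof. unfold nxt. destruct excluded_middle_informative as [e|n]; [discriminate|].
  intros _ a pi H. apply n. exists (a, pi); auto. Qed.

Lemma nxt_det {X A} (step : trans X A) z a pi : is_det step -> step z a pi -> nxt step z = Some (a, pi).
Proof. intros D H. destruct (nxt step z) as [[b p]|] eqn:E.
  - apply nxt_some in E. destruct (D _ _ _ _ _ H E); subst; auto.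
  - exfalso; eapply nxt_none; eauto. Qed.

Definition suppL {X : Type} (pi : X -> R) : list X :=
  match excluded_middle_informative (exists L, NoDup L /\ (forall x, pi x <> 0 -> In x L)) with
  | left H => filter (fun x => dec (0 < pi x)) (proj1_sig (constructive_indefinite_description _ H))
  | right _ => []
  end.

Lemma suppL_NoDup {X} (pi : X -> R) : NoDup (suppL pi).
Proof. unfold suppL. destruct excluded_middle_informative as [e|n]; [|constructor].
  destruct (constructive_indefinite_description _ e) as [L [N H]]; simpl. apply NoDup_filter; auto. Qed.

Lemma suppL_In {X} (pi : X -> R) x : is_fdist pi -> (In x (suppL pi) <-> 0 < pi x).
Proof. intros [Hn [L0 [N0 [H0 S0]]]]. unfold suppL. destruct excluded_middle_informative as [e|n].
  - destruct (constructive_indefinite_description _ e) as [L [N H]]; simpl.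
    rewrite filter_In, dec_true. split; [tauto|]. intros; split; auto. apply H; lra.
  - exfalso; apply n; exists L0; auto. Qed.

Lemma suppL_sum {X} (pi : X -> R) : is_fdist pi -> lsum pi (suppL pi) = 1.
Proof. intros F. assert (F' := F). destruct F' as [Hn [L0 [N0 [H0 S0]]]].
  change (lsum pi L0 = 1) in S0. rewrite <- S0.
  rewrite <- (lsum_filter_zero pi (fun x => dec (0 < pi x)) L0).
  - apply lsum_perm. apply NoDup_Permutation. apply suppL_NoDup. apply NoDup_filter; auto.
    intros x. rewrite suppL_In by auto. rewrite filter_In, dec_true. split; [|tauto].
    intros; split; auto. apply H0; lra.
  - intros x _ Hx. apply (proj1 (dec_false _)) in Hx. specialize (Hn x). lra. Qed.

Lemma fdist_exists_pos {X} (pi : X -> R) : is_fdist pi -> exists x, 0 < pi x.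
Proof. intros F. assert (H := suppL_sum pi F). destruct (suppL pi) as [|x l] eqn:E.
  - simpl in H. unfold lsum in H; simpl in H. lra.
  - exists x. apply (suppL_In pi x F). rewrite E; left; auto. Qed.

Lemma NoDup_flat_map {T U} (h : T -> list U) (L : list T) :
  NoDup L -> (forall x, In x L -> NoDup (h x)) ->
  (forall x y u, In x L -> In y L -> In u (h x) -> In u (h y) -> x = y) -> NoDup (flat_map h L).
Proof. induction L as [|a L IH]; intros N H D; simpl; [constructor|].
  inversion N; subst. apply NoDup_app.
  - apply H; left; auto.
  - apply IH; auto. intros; apply H; right; auto. intros x y u Hx Hy; apply D; right; auto.
  - intros u Hu Hu'. apply in_flat_map in Hu'. destruct Hu' as [y [Hy Hu2]].
    assert (a = y) by (apply (D a y u); auto; [left|right]; auto). subst; contradiction. Qed.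

Definition cstep {X A} (b : A) (pi : X -> R) (z' : X) (c : comp X A) : comp X A := (b, pi, z') :: c.

Lemma NoDup_comps {X A} (b : A) (pi : X -> R) (g : X -> list (comp X A)) L :
  NoDup L -> (forall x, In x L -> NoDup (g x)) ->
  NoDup (flat_map (fun z' => map (cstep b pi z') (g z')) L).
Proof. intros N H. apply NoDup_flat_map; auto.
  - intros x Hx. apply FinFun.Injective_map_NoDup; auto. intros c1 c2 E; inversion E; auto.
  - intros x y u _ _ H1 H2. apply in_map_iff in H1, H2. destruct H1 as [c1 [E1 _]]; destruct H2 as [c2 [E2 _]].
    subst. inversion E2; auto. Qed.

Lemma In_comps {X A} (b : A) (pi : X -> R) (g : X -> list (comp X A)) L c :
  In c (flat_map (fun z' => map (cstep b pi z') (g z')) L) <->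
  exists z' c', c = (b, pi, z') :: c' /\ In z' L /\ In c' (g z').
Proof. rewrite in_flat_map. split.
  - intros [z' [Hz Hc]]. apply in_map_iff in Hc. destruct Hc as [c' [E Hc']]. exists z', c'; subst; auto.
  - intros [z' [c' [E [Hz Hc]]]]. exists z'; split; auto. apply in_map_iff. exists c'; subst; auto. Qed.

Lemma lsum_comps {X A} (b : A) (pi : X -> R) (g : X -> list (comp X A)) L :
  lsum comp_pr (flat_map (fun z' => map (cstep b pi z') (g z')) L) =
  lsum (fun z' => pi z' * lsum comp_pr (g z')) L.
Proof. rewrite lsum_flat_map. apply lsum_ext. intros x _. rewrite lsum_map. unfold cstep; simpl.
  apply lsum_scal. Qed.

Fixpoint PTf {X A} (step : trans X A) (z : X) (al : list A) : R :=
  match al with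
  | [] => 1
  | a :: al' => match nxt step z with
                | Some (b, pi) => if dec (b = a) then lsum (fun z' => pi z' * PTf step z' al') (suppL pi) else 0
                | None => 0 end
  end.

Fixpoint PMf {X A} (step : trans X A) (z : X) (al : list A) : R :=
  match al with
  | [] => match nxt step z with Some _ => 0 | None => 1 end
  | a :: al' => match nxt step z with
                | Some (b, pi) => if dec (b = a) then lsum (fun z' => pi z' * PMf step z' al') (suppL pi) else 0
                | None => 0 end
  end.

Fixpoint compsT {X A} (step : trans X A) (z : X) (al : list A) : list (comp X A) :=
  match al with
  | [] => [[]]
  | a :: al' => match nxt step z with
                | Some (b, pi) => if dec (b = a) then flat_map (fun z' => map (cstep b pi z') (compsT step z' al')) (suppL pi) else []
                | None => [] end
  end.

Fixpoint compsM {X A} (step : trans X A) (z : X) (al : list A) : list (comp X A) :=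
  match al with
  | [] => match nxt step z with Some _ => [] | None => [[]] end
  | a :: al' => match nxt step z with
                | Some (b, pi) => if dec (b = a) then flat_map (fun z' => map (cstep b pi z') (compsM step z' al')) (suppL pi) else []
                | None => [] end
  end.

Lemma compsT_NoDup {X A} (step : trans X A) z al : NoDup (compsT step z al).
Proof. revert z; induction al; intros z; simpl. repeat constructor; auto.
  destruct (nxt step z) as [[b pi]|]; [|constructor]. destruct (dec (b = a)); [|constructor].
  apply NoDup_comps; auto. apply suppL_NoDup. Qed.

Lemma compsM_NoDup {X A} (step : trans X A) z al : NoDup (compsM step z al).
Proof. revert z; induction al; intros z; simpl. destruct (nxt step z); repeat constructor; auto.
  destruct (nxt step z) as [[b pi]|]; [|constructor]. destruct (dec (b = a)); [|constructor].
  apply NoDup_comps; auto. apply suppL_NoDup. Qed.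

Lemma compsT_sum {X A} (step : trans X A) z al : lsum comp_pr (compsT step z al) = PTf step z al.
Proof. revert z; induction al; intros z; simpl. unfold lsum; simpl; lra.
  destruct (nxt step z) as [[b pi]|]; [|reflexivity]. destruct (dec (b = a)); [|reflexivity].
  rewrite lsum_comps. apply lsum_ext; intros; rewrite IHal; auto. Qed.

Lemma compsM_sum {X A} (step : trans X A) z al : lsum comp_pr (compsM step z al) = PMf step z al.
Proof. revert z; induction al; intros z; simpl. destruct (nxt step z); unfold lsum; simpl; lra.
  destruct (nxt step z) as [[b pi]|]; [|reflexivity]. destruct (dec (b = a)); [|reflexivity].
  rewrite lsum_comps. apply lsum_ext; intros; rewrite IHal; auto. Qed.

Lemma compsT_In {X A} (step : trans X A) z al c : is_det step -> is_PTS step ->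
  (In c (compsT step z al) <-> valid_from step z c /\ comp_tr c = al).
Proof. intros D P. revert z c; induction al as [|a al IH]; intros z c; simpl.
  - split. intros [E|[]]; subst; simpl; auto. intros [_ E]. destruct c; [left; auto| discriminate].
  - destruct (nxt step z) as [[b pi]|] eqn:E.
    + assert (Hs := nxt_some _ _ _ _ E).
      destruct (dec (b = a)) eqn:Eb.
      * apply (proj1 (dec_true _)) in Eb. subst b. rewrite In_comps. split.
        -- intros [z' [c' [Ec [Hz Hc]]]]. subst c. apply IH in Hc. apply suppL_In in Hz; [|eapply P; eauto].
           simpl. destruct Hc; split; auto. f_equal; auto.
        -- intros [Hv Ht]. destruct c as [|[[a' pi'] z'] c']; [discriminate|]. simpl in Hv, Ht.
           destruct Hv as [H1 [H2 H3]]. inversion Ht; subst. destruct (D _ _ _ _ _ H1 Hs); subst.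
           exists z', c'. split; auto. split. apply suppL_In; auto. eapply P; eauto. apply IH; auto.
      * apply (proj1 (dec_false _)) in Eb. split; [intros []|]. intros [Hv Ht].
        destruct c as [|[[a' pi'] z'] c']; [discriminate|]. simpl in Hv, Ht. inversion Ht; subst.
        destruct Hv as [H1 _]. destruct (D _ _ _ _ _ H1 Hs); subst; contradiction.
    + split; [intros []|]. intros [Hv Ht]. destruct c as [|[[a' pi'] z'] c']; [discriminate|].
      simpl in Hv. destruct Hv as [H1 _]. eapply nxt_none; eauto. Qed.

Lemma maximal_nil {X A} (step : trans X A) z : is_PTS step ->
  (maximal_from step z [] <-> nxt step z = None).
Proof. intros P. unfold maximal_from. simpl. split.
  - intros [_ H]. destruct (nxt step z) as [[a pi]|] eqn:E; auto. exfalso. apply H.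
    assert (Hs := nxt_some _ _ _ _ E). destruct (fdist_exists_pos pi (P _ _ _ Hs)) as [z' Hz'].
    exists [(a, pi, z')]. split. discriminate. simpl. auto.
  - intros E. split; auto. intros [ext [Hne Hv]]. destruct ext as [|[[a pi] z'] e]; [auto|].
    simpl in Hv. destruct Hv as [H1 _]. eapply nxt_none; eauto. Qed.

Lemma maximal_cons {X A} (step : trans X A) z a pi z' c :
  maximal_from step z ((a, pi, z') :: c) <-> step z a pi /\ 0 < pi z' /\ maximal_from step z' c.
Proof. unfold maximal_from; simpl. split.
  - intros [[H1 [H2 H3]] H4]. repeat split; auto. intros [ext [Hn Hv]]. apply H4. exists ext; split; auto.
  - intros [H1 [H2 [H3 H4]]]. split; auto. intros [ext [Hn [_ [_ Hv]]]]. apply H4; exists ext; auto. Qed.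

Lemma compsM_In {X A} (step : trans X A) z al c : is_det step -> is_PTS step ->
  (In c (compsM step z al) <-> maximal_from step z c /\ comp_tr c = al).
Proof. intros D P. revert z c; induction al as [|a al IH]; intros z c; simpl.
  - destruct (nxt step z) as [[b pi]|] eqn:E.
    + split; [intros []|]. intros [Hm Ht]. destruct c; [|discriminate]. apply maximal_nil in Hm; auto. congruence.
    + split. intros [Ec|[]]; subst; simpl. split; auto. apply maximal_nil; auto.
      intros [_ Ht]. destruct c; [left; auto|discriminate].
  - destruct (nxt step z) as [[b pi]|] eqn:E.
    + assert (Hs := nxt_some _ _ _ _ E).
      destruct (dec (b = a)) eqn:Eb.
      * apply (proj1 (dec_true _)) in Eb; subst b. rewrite In_comps. split.
        -- intros [z' [c' [Ec [Hz Hc]]]]. subst c. apply IH in Hc. apply suppL_In in Hz; [|eapply P; eauto].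
           destruct Hc. split. apply maximal_cons; auto. simpl; f_equal; auto.
        -- intros [Hv Ht]. destruct c as [|[[a' pi'] z'] c']; [discriminate|]. simpl in Ht.
           apply maximal_cons in Hv.
           destruct Hv as [H1 [H2 H3]]. inversion Ht; subst. destruct (D _ _ _ _ _ H1 Hs); subst.
           exists z', c'. split; auto. split. apply suppL_In; auto. eapply P; eauto. apply IH; auto.
      * apply (proj1 (dec_false _)) in Eb. split; [intros []|]. intros [Hv Ht].
        destruct c as [|[[a' pi'] z'] c']; [discriminate|]. simpl in Ht. inversion Ht; subst.
        apply maximal_cons in Hv. destruct Hv as [H1 _]. destruct (D _ _ _ _ _ H1 Hs); subst; contradiction.
    + split; [intros []|]. intros [Hv Ht]. destruct c as [|[[a' pi'] z'] c']; [discriminate|].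
      apply maximal_cons in Hv. destruct Hv as [H1 _]. eapply nxt_none; eauto. Qed.


Fixpoint lastst {X A : Type} (z : X) (c : Defs.comp X A) : X :=
  match c with [] => z | (_, _, z') :: c' => lastst z' c' end.

Lemma lsum_indicator {T} (a : T) (v : R) L : NoDup L -> In a L ->
  lsum (fun b => if dec (a = b) then v else 0) L = v.
Proof. intros N H. destruct (in_split _ _ H) as [l1 [l2 E]]; subst.
  apply NoDup_remove_2 in N. rewrite lsum_app, lsum_cons.
  rewrite (lsum_zero _ l1), (lsum_zero _ l2).
  - destruct (dec (a = a)) eqn:E; [lra|]. apply (proj1 (dec_false _)) in E; contradiction.
  - intros x Hx. destruct (dec (a = x)) eqn:E; auto. apply (proj1 (dec_true _)) in E; subst.
    exfalso; apply N; apply in_or_app; auto.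
  - intros x Hx. destruct (dec (a = x)) eqn:E; auto. apply (proj1 (dec_true _)) in E; subst.
    exfalso; apply N; apply in_or_app; auto. Qed.

Lemma lsum_pos {T} (f : T -> R) L x : (forall y, In y L -> 0 <= f y) -> In x L -> 0 < f x -> 0 < lsum f L.
Proof. intros H Hx Hf. destruct (in_split _ _ Hx) as [l1 [l2 E]]; subst.
  rewrite lsum_app, lsum_cons.
  assert (0 <= lsum f l1) by (apply lsum_nonneg; intros; apply H; apply in_or_app; auto).
  assert (0 <= lsum f l2) by (apply lsum_nonneg; intros; apply H; apply in_or_app; right; right; auto). lra. Qed.

Lemma lsum_nonzero {T} (f : T -> R) L : lsum f L <> 0 -> exists x, In x L /\ f x <> 0.
Proof. intros H. destruct (classic (exists x, In x L /\ f x <> 0)) as [e|n]; auto.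
  exfalso; apply H. apply lsum_zero. intros x Hx. apply NNPP. intros Hf; apply n; exists x; auto. Qed.

Lemma PTf_nonneg {X A} (step : trans X A) : is_PTS step -> forall al z, 0 <= PTf step z al.
Proof. intros P al; induction al; intros z; simpl; [lra|].
  destruct (nxt step z) as [[b pi]|] eqn:E; [|lra]. destruct (dec (b = a)); [|lra].
  apply lsum_nonneg. intros z' _. apply Rmult_le_pos; auto. apply (P _ _ _ (nxt_some _ _ _ _ E)). Qed.

Lemma PMf_nonneg {X A} (step : trans X A) : is_PTS step -> forall al z, 0 <= PMf step z al.
Proof. intros P al; induction al; intros z; simpl. destruct (nxt step z); lra.
  destruct (nxt step z) as [[b pi]|] eqn:E; [|lra]. destruct (dec (b = a)); [|lra].
  apply lsum_nonneg. intros z' _. apply Rmult_le_pos; auto. apply (P _ _ _ (nxt_some _ _ _ _ E)). Qed.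

Lemma I1 {X A} (step : trans X A) (Acts : list A) : is_det step -> is_PTS step -> NoDup Acts ->
  forall al z, (forall c, valid_from step z c -> comp_tr c = al -> forall b pi, step (lastst z c) b pi -> In b Acts) ->
  PTf step z al = PMf step z al + lsum (fun b => PTf step z (al ++ [b])) Acts.
Proof. intros D P N al; induction al as [|a al IH]; intros z Cov.
  - simpl. destruct (nxt step z) as [[a pi]|] eqn:E.
    + assert (Hs := nxt_some _ _ _ _ E). assert (Ha : In a Acts) by exact (Cov [] I eq_refl a pi Hs).
      rewrite (lsum_ext _ (fun b => if dec (a = b) then 1 else 0)). rewrite lsum_indicator; auto. lra.
      intros b _. destruct (dec (a = b)); auto. rewrite (lsum_ext _ pi). apply suppL_sum. eapply P; eauto.
      intros; lra.
    + rewrite lsum_zero. lra. intros; reflexivity.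
  - simpl. destruct (nxt step z) as [[b0 pi]|] eqn:E.
    + assert (Hs := nxt_some _ _ _ _ E). destruct (dec (b0 = a)) eqn:Eb.
      * apply (proj1 (dec_true _)) in Eb; subst b0.
        rewrite (lsum_ext (fun z' => pi z' * PTf step z' al)
                  (fun z' => pi z' * PMf step z' al + lsum (fun b => pi z' * PTf step z' (al ++ [b])) Acts)).
        rewrite lsum_plus. f_equal. apply lsum_comm.
        intros z' Hz'. rewrite IH. rewrite lsum_scal; lra.
        intros c Hc Ht b pi' Hst. apply (Cov ((a, pi, z') :: c)) with (pi := pi'); simpl; auto.
        repeat split; auto. apply suppL_In; auto. eapply P; eauto. f_equal; auto.
      * rewrite lsum_zero. lra. intros; reflexivity.
    + rewrite lsum_zero. lra. intros; reflexivity. Qed.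

Lemma PTf_witness {X A} (step : trans X A) z al : is_det step -> is_PTS step ->
  PTf step z al <> 0 -> exists c, valid_from step z c /\ comp_tr c = al.
Proof. intros D P H. rewrite <- compsT_sum in H. destruct (compsT step z al) as [|c l] eqn:E.
  - exfalso; apply H; reflexivity.
  - exists c. apply (compsT_In step z al c D P). rewrite E; left; auto. Qed.

Lemma length_tr {X A} (c : Defs.comp X A) : length (comp_tr c) = length c.
Proof. unfold comp_tr. apply length_map. Qed.

Definition bounded {X A} (step : trans X A) z n := forall c, valid_from step z c -> (length c <= n)%nat.

Lemma PTf_zero {X A} (step : trans X A) z n al : is_det step -> is_PTS step -> bounded step z n ->
  (n < length al)%nat -> PTf step z al = 0.
Proof. intros D P B H. destruct (Req_dec (PTf step z al) 0) as [e|ne]; auto.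
  destruct (PTf_witness _ _ _ D P ne) as [c [Hv Ht]]. apply B in Hv. subst. rewrite length_tr in H. lia. Qed.

Fixpoint actsL {X A} (step : trans X A) (n : nat) (z : X) : list A :=
  match n with
  | O => match nxt step z with None => [] | Some (b, _) => [b] end
  | S n' => match nxt step z with None => [] | Some (b, pi) => b :: flat_map (actsL step n') (suppL pi) end
  end.

Lemma actsL_cov {X A} (step : trans X A) : is_det step -> is_PTS step ->
  forall c n z, valid_from step z c -> (length c <= n)%nat -> forall b pi, step (lastst z c) b pi -> In b (actsL step n z).
Proof. intros D P c; induction c as [|[[a pi] z'] c IH]; intros n z Hv Hl b pi' Hs; simpl in *.
  - destruct n; simpl; rewrite (nxt_det _ _ _ _ D Hs); left; auto.
  - destruct Hv as [H1 [H2 H3]]. destruct n; [lia|]. simpl. rewrite (nxt_det _ _ _ _ D H1).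
    right. apply in_flat_map. exists z'. split. apply suppL_In; auto. eapply P; eauto.
    eapply IH; eauto. lia. Qed.

Definition Adec {A : Type} : forall x y : A, {x = y} + {x <> y} := fun x y => excluded_middle_informative (x = y).

Lemma PT_PM_equiv {X1 X2 A} (s1 : trans X1 A) (s2 : trans X2 A) z1 z2 n1 n2 :
  is_det s1 -> is_PTS s1 -> is_det s2 -> is_PTS s2 -> bounded s1 z1 n1 -> bounded s2 z2 n2 ->
  ((forall al, PTf s1 z1 al = PTf s2 z2 al) <-> (forall al, PMf s1 z1 al = PMf s2 z2 al)).
Proof. intros D1 P1 D2 P2 B1 B2.
  set (Acts := nodup Adec (actsL s1 n1 z1 ++ actsL s2 n2 z2)).
  assert (NA : NoDup Acts) by apply NoDup_nodup.
  assert (C1 : forall al, PTf s1 z1 al = PMf s1 z1 al + lsum (fun b => PTf s1 z1 (al ++ [b])) Acts).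
  { intros al. apply I1; auto. intros c Hv _ b pi Hs. unfold Acts. apply nodup_In. apply in_or_app; left.
    eapply actsL_cov; eauto. }
  assert (C2 : forall al, PTf s2 z2 al = PMf s2 z2 al + lsum (fun b => PTf s2 z2 (al ++ [b])) Acts).
  { intros al. apply I1; auto. intros c Hv _ b pi Hs. unfold Acts. apply nodup_In. apply in_or_app; right.
    eapply actsL_cov; eauto. }
  split.
  - intros H al. specialize (C1 al); specialize (C2 al).
    rewrite H in C1. rewrite (lsum_ext _ (fun b => PTf s2 z2 (al ++ [b]))) in C1 by (intros; auto). lra.
  - intros H. set (K := max n1 n2).
    assert (G : forall m al, (K < length al + m)%nat -> PTf s1 z1 al = PTf s2 z2 al).
    { induction m; intros al Hl.
      - rewrite (PTf_zero s1 z1 n1), (PTf_zero s2 z2 n2); auto; lia.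
      - destruct (Nat.lt_ge_cases K (length al + m)) as [h|h]; [apply IHm; auto|].
        rewrite C1, C2, H. f_equal. apply lsum_ext. intros b _. apply IHm.
        rewrite length_app; simpl; lia. }
    intros al. apply (G (S K)). lia. Qed.


Definition tailsA {A} (a : A) (Bs : list (list A)) : list (list A) :=
  flat_map (fun beta => match beta with [] => [] | b :: tl => if dec (a = b) then [tl] else [] end) Bs.

Lemma tailsA_cons {A} (a : A) beta Bs : tailsA a (beta :: Bs) =
  (match beta with [] => [] | b :: tl => if dec (a = b) then [tl] else [] end) ++ tailsA a Bs.
Proof. reflexivity. Qed.

Lemma lsum_tails {A} (a : A) (g : list A -> R) Bs :
  lsum (fun beta => match beta with [] => 0 | b :: tl => if dec (a = b) then g tl else 0 end) Bs
  = lsum g (tailsA a Bs).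
Proof. induction Bs as [|beta Bs IH]; [reflexivity|]. rewrite tailsA_cons. rewrite lsum_app.
  rewrite <- IH. rewrite lsum_cons. f_equal.
  destruct beta as [|b tl]; simpl. reflexivity. destruct (dec (a = b)); simpl; unfold lsum; simpl; lra. Qed.

Lemma In_tails {A} (a : A) Bs tl : In tl (tailsA a Bs) <-> In (a :: tl) Bs.
Proof. unfold tailsA. rewrite in_flat_map. split.
  - intros [beta [Hb Ht]]. destruct beta as [|b tl']; [destruct Ht|].
    destruct (dec (a = b)) eqn:E; [|destruct Ht]. apply (proj1 (dec_true _)) in E; subst.
    destruct Ht as [Ht|[]]; subst; auto.
  - intros H. exists (a :: tl). split; auto. destruct (dec (a = a)) eqn:E. left; auto.
    apply (proj1 (dec_false _)) in E; contradiction. Qed.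

Lemma NoDup_tails {A} (a : A) Bs : NoDup Bs -> NoDup (tailsA a Bs).
Proof. induction 1. constructor. rewrite tailsA_cons.
  destruct x as [|b tl]; simpl; auto. destruct (dec (a = b)) eqn:E; simpl; auto.
  apply (proj1 (dec_true _)) in E; subst. constructor; auto. rewrite In_tails; auto. Qed.

Lemma bounded_step {X A} (step : trans X A) z n a pi z' :
  bounded step z (S n) -> step z a pi -> 0 < pi z' -> bounded step z' n.
Proof. intros B Hs Hp c Hv. assert (H := B ((a, pi, z') :: c)). simpl in H. specialize (H (conj Hs (conj Hp Hv))). lia. Qed.

Lemma bounded_nz {X A} (step : trans X A) z n a pi : is_PTS step ->
  bounded step z n -> step z a pi -> exists n', n = S n'.
Proof. intros P B Hs. destruct (fdist_exists_pos pi (P _ _ _ Hs)) as [z' Hz'].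
  assert (H := B [(a, pi, z')]). simpl in H. specialize (H (conj Hs (conj Hz' I))).
  destruct n; [lia|]. eauto. Qed.

Lemma PMf_some {X A} (step : trans X A) z a pi : nxt step z = Some (a, pi) ->
  forall beta, PMf step z beta = match beta with [] => 0 | b :: tl => if dec (a = b) then lsum (fun z' => pi z' * PMf step z' tl) (suppL pi) else 0 end.
Proof. intros E beta. destruct beta; simpl; rewrite E; auto. Qed.

Lemma PM_total {X A} (step : trans X A) : is_det step -> is_PTS step ->
  forall n z U, bounded step z n -> NoDup U -> (forall beta, PMf step z beta <> 0 -> In beta U) ->
  lsum (PMf step z) U = 1.
Proof. intros D P n; induction n; intros z U B N Cov.
  - destruct (nxt step z) as [[a pi]|] eqn:E.
    + destruct (bounded_nz _ _ _ _ _ P B (nxt_some _ _ _ _ E)) as [n' H]; discriminate.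
    + rewrite (lsum_ext _ (fun beta => if dec ([] = beta) then 1 else 0)).
      apply lsum_indicator; auto. apply Cov. simpl; rewrite E; lra.
      intros beta _. destruct beta; simpl; rewrite E.
      destruct (dec ([] = [])) eqn:Q; auto. apply (proj1 (dec_false _)) in Q; contradiction.
      destruct (dec ([] = a :: beta)) eqn:Q; auto. apply (proj1 (dec_true _)) in Q; discriminate.
  - destruct (nxt step z) as [[a pi]|] eqn:E.
    + assert (Hs := nxt_some _ _ _ _ E). assert (F := P _ _ _ Hs).
      rewrite (lsum_ext _ _ _ (fun beta _ => PMf_some step z a pi E beta)).
      rewrite lsum_tails. rewrite <- lsum_comm.
      rewrite (lsum_ext _ pi). apply suppL_sum; auto.
      intros z' Hz'. apply suppL_In in Hz'; auto. rewrite lsum_scal. rewrite IHn. lra.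
      * eapply bounded_step; eauto.
      * apply NoDup_tails; auto.
      * intros tl Htl. apply In_tails. apply Cov. rewrite (PMf_some step z a pi E).
        destruct (dec (a = a)) eqn:Q; [|apply (proj1 (dec_false _)) in Q; contradiction].
        apply Rgt_not_eq. apply (lsum_pos _ _ z'). intros; apply Rmult_le_pos. apply F. apply PMf_nonneg; auto.
        apply suppL_In; auto. apply Rmult_lt_0_compat; auto.
        assert (0 <= PMf step z' tl) by (apply PMf_nonneg; auto). lra.
    + rewrite (lsum_ext _ (fun beta => if dec ([] = beta) then 1 else 0)).
      apply lsum_indicator; auto. apply Cov. simpl; rewrite E; lra.
      intros beta _. destruct beta; simpl; rewrite E.
      destruct (dec ([] = [])) eqn:Q; auto. apply (proj1 (dec_false _)) in Q; contradiction.
      destruct (dec ([] = a :: beta)) eqn:Q; auto. apply (proj1 (dec_true _)) in Q; discriminate.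
Qed.

Lemma cover_list {T U} (L : list T) (Q : T -> U -> Prop) :
  (forall x, In x L -> exists V, forall u, Q x u -> In u V) -> exists V, forall x u, In x L -> Q x u -> In u V.
Proof. induction L as [|a L IH]; intros H. exists []; intros x u [].
  destruct (H a (or_introl eq_refl)) as [V1 H1]. destruct IH as [V2 H2]. intros; apply H; right; auto.
  exists (V1 ++ V2). intros x u [E|Hx] Hq; apply in_or_app; [subst; left; auto| right; eauto]. Qed.

Lemma cover_exists {X A} (step : trans X A) : is_det step -> is_PTS step ->
  forall n z, bounded step z n -> exists U, forall beta, PMf step z beta <> 0 -> In beta U.
Proof. intros D P n; induction n; intros z B.
  - destruct (nxt step z) as [[a pi]|] eqn:E.
    + destruct (bounded_nz _ _ _ _ _ P B (nxt_some _ _ _ _ E)) as [n' H]; discriminate.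
    + exists [[]]. intros beta H. destruct beta; [left; auto|]. simpl in H; rewrite E in H. lra.
  - destruct (nxt step z) as [[a pi]|] eqn:E.
    + assert (Hs := nxt_some _ _ _ _ E). assert (F := P _ _ _ Hs).
      destruct (cover_list (suppL pi) (fun z' tl => PMf step z' tl <> 0)) as [V HV].
      { intros z' Hz'. apply IHn. eapply bounded_step; eauto. apply suppL_In; auto. }
      exists (map (cons a) V). intros beta H. rewrite (PMf_some step z a pi E) in H.
      destruct beta as [|b tl]; [lra|]. destruct (dec (a = b)) eqn:Q; [|lra].
      apply (proj1 (dec_true _)) in Q; subst b. apply lsum_nonzero in H. destruct H as [z' [Hz' Hn]].
      apply in_map. apply (HV z'); auto. intros E'; apply Hn; rewrite E'; lra.
    + exists [[]]. intros beta H. destruct beta; [left; auto|]. simpl in H; rewrite E in H. lra.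
Qed.

Definition Ldec {A : Type} : forall x y : list A, {x = y} + {x <> y} := fun x y => excluded_middle_informative (x = y).

Lemma PM_le1 {X A} (step : trans X A) z n Bs : is_det step -> is_PTS step -> bounded step z n -> NoDup Bs ->
  lsum (PMf step z) Bs <= 1.
Proof. intros D P B N. destruct (cover_exists step D P n z B) as [U HU].
  rewrite <- (PM_total step D P n z (nodup Ldec U) B (NoDup_nodup _ _)).
  apply lsum_sub_le; auto. apply NoDup_nodup. intros; apply PMf_nonneg; auto.
  intros x _ H; apply nodup_In; auto. intros; apply PMf_nonneg; auto.
  intros beta H; apply nodup_In; auto. Qed.


Definition Kb (r : R) : nat := Z.to_nat (up (/ r)).

Lemma Kb_spec r k : 0 < r -> INR k * r <= 1 -> (k <= Kb r)%nat.
Proof. intros Hr Hk. unfold Kb. destruct (archimed (/ r)) as [H1 _].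
  assert (INR k <= / r). { apply (Rmult_le_reg_r r); auto. rewrite Rinv_l; lra. }
  assert (INR k < IZR (up (/ r))) by lra. rewrite INR_IZR_INZ in H0. apply lt_IZR in H0. lia. Qed.

Fixpoint sums_upto (k : nat) (L : list R) : list R :=
  match k with O => [0] | S k' => 0 :: flat_map (fun x => map (Rplus x) (sums_upto k' L)) L end.

Lemma sums_upto_In {T} (Lz : list T) (g : T -> R) W : forall k,
  (forall x, In x Lz -> In (g x) W) -> (length Lz <= k)%nat -> In (lsum g Lz) (sums_upto k W).
Proof. induction Lz as [|x Lz IH]; intros k H Hl.
  - destruct k; simpl; left; reflexivity.
  - destruct k; simpl in Hl; [lia|]. rewrite lsum_cons. simpl sums_upto. right. apply in_flat_map. exists (g x). split.
    apply H; left; auto. apply in_map. apply IH. intros; apply H; right; auto. lia. Qed.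

Fixpoint comb {S} (pi' : S -> R) (W : S -> list R) (vs : list S) : list R :=
  match vs with
  | [] => [0]
  | v :: vs' => flat_map (fun x => map (fun y => pi' v * x + y) (comb pi' W vs')) (sums_upto (Kb (pi' v)) (W v))
  end.

Lemma filter_filter_len {T} (f g : T -> bool) L : (length (filter f (filter g L)) <= length (filter f L))%nat.
Proof. induction L; simpl; auto. destruct (g a); simpl; destruct (f a); simpl; lia. Qed.

Lemma comb_In {S T} (pi' : S -> R) (W : S -> list R) vs : forall (Lz : list T) (corr : T -> S) (g p : T -> R),
  (forall x, In x Lz -> In (corr x) vs) -> (forall x, In x Lz -> In (g x) (W (corr x))) ->
  (forall v, In v vs -> (length (filter (fun x => dec (corr x = v)) Lz) <= Kb (pi' v))%nat) ->
  (forall x, In x Lz -> p x = pi' (corr x)) ->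
  In (lsum (fun x => p x * g x) Lz) (comb pi' W vs).
Proof. induction vs as [|v vs IH]; intros Lz corr g p H1 H2 H3 H4.
  - destruct Lz as [|x Lz]. left; reflexivity. exfalso. apply (H1 x); left; auto.
  - simpl. rewrite (lsum_filter_split _ (fun x => dec (corr x = v))).
    apply in_flat_map. exists (lsum g (filter (fun x => dec (corr x = v)) Lz)). split.
    + apply sums_upto_In. intros x Hx. apply filter_In in Hx. destruct Hx as [Hx E].
      apply (proj1 (dec_true _)) in E. rewrite <- E. auto. apply H3; left; auto.
    + assert (E1 : lsum (fun x => p x * g x) (filter (fun x => dec (corr x = v)) Lz) =
                 pi' v * lsum g (filter (fun x => dec (corr x = v)) Lz)).
      { rewrite <- lsum_scal. apply lsum_ext. intros x Hx. apply filter_In in Hx. destruct Hx as [Hx E].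
        apply (proj1 (dec_true _)) in E. rewrite H4; auto. rewrite E; auto. }
      rewrite E1. apply in_map. apply IH with (corr := corr).
      * intros x Hx. apply filter_In in Hx. destruct Hx as [Hx E]. apply Bool.negb_true_iff in E.
        apply (proj1 (dec_false _)) in E. destruct (H1 x Hx) as [E'|E']; auto. congruence.
      * intros x Hx. apply filter_In in Hx. apply H2; tauto.
      * intros v' Hv'. eapply Nat.le_trans. apply filter_filter_len. apply H3; right; auto.
      * intros x Hx. apply filter_In in Hx. apply H4; tauto. Qed.

Definition tlist {S A} (st : trans S A) (u : S) (a : A) : list (S -> R) :=
  match excluded_middle_informative (exists L, forall pi, st u a pi -> In pi L) with
  | left H => proj1_sig (constructive_indefinite_description _ H)
  | right _ => [] end.

Lemma tlist_In {S A} (st : trans S A) u a pi : image_finite st -> st u a pi -> In pi (tlist st u a).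
Proof. intros Hi H. unfold tlist. destruct excluded_middle_informative as [e|n].
  - destruct (constructive_indefinite_description _ e) as [L HL]; simpl; auto.
  - exfalso; apply n; apply Hi. Qed.

Fixpoint Vals {S A} (st : trans S A) (al : list A) (u : S) : list R :=
  match al with
  | [] => [0; 1]
  | a :: al' => 0 :: flat_map (fun pi' => comb pi' (Vals st al') (suppL pi')) (tlist st u a)
  end.

Lemma Vals_In {S A} (st : trans S A) (s : S) (Z : resolution st s) : is_PTS st -> image_finite st ->
  forall al z, In (PMf (rstep Z) z al) (Vals st al (rcorr Z z)).
Proof. intros Hp Hi al; induction al as [|a al IH]; intros z.
  - simpl. destruct (nxt (rstep Z) z); simpl; auto.
  - simpl. destruct (nxt (rstep Z) z) as [[b pi]|] eqn:E; [|left; auto].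
    destruct (dec (b = a)) eqn:Q; [|left; auto]. apply (proj1 (dec_true _)) in Q; subst b.
    assert (Hs := nxt_some _ _ _ _ E). assert (F := @r_pts _ _ _ _ Z _ _ _ Hs).
    destruct (@r_match _ _ _ _ Z _ _ _ Hs) as [pi' [Hst Hpi]]. assert (F' := Hp _ _ _ Hst).
    right. apply in_flat_map. exists pi'. split. apply tlist_In; auto.
    apply comb_In with (corr := rcorr Z).
    + intros x Hx. apply suppL_In in Hx; auto. apply suppL_In; auto. rewrite <- Hpi; auto.
    + intros x _. apply IH.
    + intros v Hv. set (Lv := filter _ _).
      destruct Lv as [|x l] eqn:EL. simpl; lia.
      assert (Hx : In x Lv) by (rewrite EL; left; auto). unfold Lv in Hx. apply filter_In in Hx.
      destruct Hx as [Hx Ex]. apply (proj1 (dec_true _)) in Ex.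
      assert (Pv : 0 < pi' v). { rewrite <- Ex, <- Hpi. apply suppL_In; auto. }
      rewrite <- EL. apply Kb_spec; auto. rewrite <- lsum_const.
      rewrite (lsum_ext _ pi). rewrite <- (suppL_sum pi F).
      rewrite (lsum_filter_split pi (fun x => dec (rcorr Z x = v)) (suppL pi)).
      assert (0 <= lsum pi (filter (fun x => negb (dec (rcorr Z x = v))) (suppL pi))).
      { apply lsum_nonneg. intros; apply F. } unfold Lv. lra.
      intros y Hy. unfold Lv in Hy. apply filter_In in Hy. destruct Hy as [_ Ey].
      apply (proj1 (dec_true _)) in Ey. rewrite Hpi, Ey; auto.
    + intros x _. apply Hpi. Qed.

Definition mingap (r : R) (W : list R) : R :=
  fold_right (fun w acc => if dec (w = r) then acc else Rmin (Rabs (w - r)) acc) 1 W.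

Lemma mingap_pos r W : 0 < mingap r W.
Proof. induction W; simpl. lra. destruct (dec (a = r)) eqn:E; auto.
  apply (proj1 (dec_false _)) in E. apply Rmin_glb_lt; auto. apply Rabs_pos_lt. lra. Qed.

Lemma mingap_eq r W w : In w W -> Rabs (w - r) < mingap r W -> w = r.
Proof. induction W; simpl; intros Hw Hl. destruct Hw.
  destruct (dec (a = r)) eqn:E.
  - destruct Hw as [Hw|Hw]. subst. apply (proj1 (dec_true _)) in E; auto. apply IHW; auto.
  - apply (proj1 (dec_false _)) in E. destruct Hw as [Hw|Hw].
    + subst. exfalso. assert (Rmin (Rabs (w - r)) (mingap r W) <= Rabs (w - r)) by apply Rmin_l. lra.
    + apply IHW; auto. eapply Rlt_le_trans; eauto. fold (mingap r W). apply Rmin_r. Qed.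


Fixpoint ftr {A} (Phi : tformula A) : list A := match Phi with TTop => [] | TDiam a f => a :: ftr f end.
Fixpoint fof {A} (l : list A) : tformula A := match l with [] => TTop | a :: l => TDiam a (fof l) end.
Lemma ftr_fof {A} (l : list A) : ftr (fof l) = l.
Proof. induction l; simpl; f_equal; auto. Qed.
Lemma fof_ftr {A} (Phi : tformula A) : fof (ftr Phi) = Phi.
Proof. induction Phi; simpl; f_equal; auto. Qed.

Lemma csat_iff {X A} (c : Defs.comp X A) Phi : csat c Phi /\ length c = depth Phi <-> comp_tr c = ftr Phi.
Proof. revert c; induction Phi as [|a Phi IH]; intros c; destruct c as [|[[b pi] z] c]; simpl.
  - tauto. - split. intros [_ H]; discriminate. discriminate.
  - split. intros [[] _]. discriminate.
  - split.
    + intros [[E H1] H2]. subst. change (a :: comp_tr c = a :: ftr Phi). f_equal. apply IH. split; auto.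
    + intros E. change (b :: comp_tr c = a :: ftr Phi) in E. inversion E. subst.
      apply IH in H1. destruct H1. split; auto. Qed.


Lemma res_lift {S A} (st : trans S A) s (Z : resolution st s) : forall c z,
  valid_from (rstep Z) z c -> exists c', valid_from st (rcorr Z z) c' /\ length c' = length c.
Proof. induction c as [|[[a pi] z'] c IH]; intros z Hv. exists []; simpl; auto.
  simpl in Hv. destruct Hv as [H1 [H2 H3]]. destruct (@r_match _ _ _ _ Z _ _ _ H1) as [pi' [Hs Hp]].
  destruct (IH z' H3) as [c' [Hv' Hl]]. exists ((a, pi', rcorr Z z') :: c'). simpl. repeat split; auto.
  rewrite <- Hp; auto. Qed.

Lemma res_bounded {S A} (st : trans S A) s (Z : resolution st s) : finite_proc st s ->
  exists N, bounded (rstep Z) (rinit Z) N.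
Proof. intros [N HN]. exists N. intros c Hv. destruct (res_lift st s Z c _ Hv) as [c' [Hv' Hl]].
  rewrite (@r_corr_init _ _ _ _ Z) in Hv'. rewrite <- Hl. auto. Qed.

Lemma res_det {S A} (st : trans S A) s (Z : resolution st s) : is_det (rstep Z).
Proof. exact (@r_det _ _ _ _ Z). Qed.
Lemma res_pts {S A} (st : trans S A) s (Z : resolution st s) : is_PTS (rstep Z).
Proof. exact (@r_pts _ _ _ _ Z). Qed.

Lemma PrT {S A} (st : trans S A) s (Z : resolution st s) al : Pr_trace Z al = PTf (rstep Z) (rinit Z) al.
Proof. unfold Pr_trace. rewrite (set_sum_list _ _ (compsT (rstep Z) (rinit Z) al)).
  apply compsT_sum. apply compsT_NoDup. intros c. apply compsT_In. apply res_det. apply res_pts. Qed.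

Lemma PMset {S A} (st : trans S A) s (Z : resolution st s) Phi :
  set_sum (fun c : Defs.comp (rZ Z) A => maximal_from (rstep Z) (rinit Z) c /\ csat c Phi /\ length c = depth Phi) comp_pr
  = PMf (rstep Z) (rinit Z) (ftr Phi).
Proof. rewrite (set_sum_list _ _ (compsM (rstep Z) (rinit Z) (ftr Phi))).
  apply compsM_sum. apply compsM_NoDup. intros c. rewrite compsM_In by (apply res_det || apply res_pts).
  rewrite <- csat_iff. tauto. Qed.

Definition Psi_of {S A} {st : trans S A} {s} (Z : resolution st s) : tdformula A :=
  fun Phi => PMf (rstep Z) (rinit Z) (ftr Phi).

Lemma fof_inj {A} : FinFun.Injective (@fof A).
Proof. intros x y E. rewrite <- (ftr_fof x), <- (ftr_fof y), E; auto. Qed.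
Lemma ftr_inj {A} : FinFun.Injective (@ftr A).
Proof. intros x y E. rewrite <- (fof_ftr x), <- (fof_ftr y), E; auto. Qed.

Lemma Psi_in_L {S A} (st : trans S A) s (Z : resolution st s) : finite_proc st s -> Lset st s (Psi_of Z).
Proof. intros F. destruct (res_bounded st s Z F) as [N B].
  assert (D := res_det st s Z). assert (P := res_pts st s Z).
  split.
  - split. intros Phi; apply PMf_nonneg; auto.
    destruct (cover_exists _ D P N _ B) as [U HU].
    exists (map fof (nodup Ldec U)). split. apply FinFun.Injective_map_NoDup. apply fof_inj. apply NoDup_nodup.
    split. intros Phi H. rewrite <- (fof_ftr Phi). apply in_map. apply nodup_In. apply HU; auto.
    change (lsum (Psi_of Z) (map fof (nodup Ldec U)) = 1). rewrite lsum_map.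
    unfold Psi_of. rewrite (lsum_ext _ (PMf (rstep Z) (rinit Z))) by (intros; rewrite ftr_fof; auto).
    apply (PM_total _ D P N); auto. apply NoDup_nodup. intros; apply nodup_In; auto.
  - exists Z. intros Phi _. apply PMset. Qed.

Lemma L_char {S A} (st : trans S A) t y : Lset st t y ->
  exists Zt : resolution st t, forall Phi, 0 < y Phi -> PMf (rstep Zt) (rinit Zt) (ftr Phi) = y Phi.
Proof. intros [_ [Zt H]]. exists Zt. intros Phi Hp. rewrite <- PMset. auto. Qed.


Lemma no_lub_empty (E : R -> Prop) l : is_lub E l -> exists x, E x.
Proof. intros [H1 H2]. apply NNPP; intros n. assert (l <= l - 1). apply H2. intros x Hx; exfalso; apply n; eauto. lra. Qed.

Lemma Rinf_ge (E : R -> Prop) d m : (forall r, E r -> m <= r) -> m <= d -> m <= Rinf E d.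
Proof. intros H Hd. unfold Rinf. destruct excluded_middle_informative as [e|n]; auto.
  destruct (constructive_indefinite_description _ e) as [l [H1 H2]]; simpl.
  assert (l <= - m). apply H2. intros x Hx. apply H in Hx. lra. lra. Qed.

Lemma Rinf_le (E : R -> Prop) d m r : E r -> (forall r', E r' -> m <= r') -> Rinf E d <= r.
Proof. intros Hr H. unfold Rinf. destruct excluded_middle_informative as [e|n].
  - destruct (constructive_indefinite_description _ e) as [l [H1 H2]]; simpl.
    assert (- r <= l). apply H1. rewrite Ropp_involutive; auto. lra.
  - exfalso. apply n. apply upper_bound_thm. exists (- m). intros x Hx. apply H in Hx. lra.
    exists (- r). rewrite Ropp_involutive; auto. Qed.

Lemma Rinf_le_bound (E : R -> Prop) d : (forall r, E r -> r <= d) -> Rinf E d <= d.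
Proof. intros H. unfold Rinf. destruct excluded_middle_informative as [e|n]; [|lra].
  destruct (constructive_indefinite_description _ e) as [l Hl]; simpl.
  destruct (no_lub_empty _ _ Hl) as [x Hx]. destruct Hl as [H1 _]. assert (x <= l) by (apply H1; auto).
  apply H in Hx. lra. Qed.

Lemma Rinf_lt (E : R -> Prop) d c : Rinf E d < c -> c <= d -> exists x, E x /\ x < c.
Proof. intros H Hc. unfold Rinf in H. destruct excluded_middle_informative as [e|n]; [|lra].
  destruct (constructive_indefinite_description _ e) as [l [H1 H2]]; simpl in H.
  apply NNPP; intros N. assert (l <= - c). apply H2. intros x Hx. apply NNPP; intros Q.
  apply N. exists (- x). split; auto. lra. lra. Qed.

Lemma Rsup_ge (E : R -> Prop) d x M : E x -> (forall r, E r -> r <= M) -> x <= Rsup E d.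
Proof. intros Hx H. unfold Rsup. destruct excluded_middle_informative as [e|n].
  - destruct (constructive_indefinite_description _ e) as [l [H1 H2]]; simpl. apply H1; auto.
  - exfalso. apply n. apply upper_bound_thm. exists M. intros r Hr; apply H; auto. eauto. Qed.

Lemma Rsup_zero (E : R -> Prop) : (forall r, E r -> r = 0) -> Rsup E 0 = 0.
Proof. intros H. unfold Rsup. destruct excluded_middle_informative as [e|n]; auto.
  destruct (constructive_indefinite_description _ e) as [l Hl]; simpl.
  destruct (no_lub_empty _ _ Hl) as [x Hx]. destruct Hl as [H1 H2].
  assert (x <= l) by (apply H1; auto). assert (l <= 0). apply H2. intros y Hy; rewrite (H y Hy); lra.
  rewrite (H x Hx) in *. lra. Qed.

Lemma set_sum_nonneg {T} (C : T -> Prop) f : (forall x, C x -> 0 <= f x) -> 0 <= set_sum C f.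
Proof. intros H. unfold set_sum. destruct excluded_middle_informative as [e|n]; [|lra].
  destruct (constructive_indefinite_description _ e) as [L [N HL]]; simpl.
  apply lsum_nonneg. intros x Hx; apply H, HL; auto. Qed.

Lemma set_sum_zero {T} (C : T -> Prop) f : (forall x, C x -> f x = 0) -> set_sum C f = 0.
Proof. intros H. unfold set_sum. destruct excluded_middle_informative as [e|n]; auto.
  destruct (constructive_indefinite_description _ e) as [L [N HL]]; simpl.
  apply lsum_zero. intros x Hx; apply H, HL; auto. Qed.


Lemma lsum_filter_ind {T} (P : T -> bool) f L : lsum f (filter P L) = lsum (fun x => if P x then f x else 0) L.
Proof. induction L as [|a L IH]; auto. simpl filter. rewrite (lsum_cons _ a L). destruct (P a) eqn:E. rewrite lsum_cons, IH; lra. rewrite IH; lra. Qed.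

Lemma set_sum_ind {T} (C : T -> Prop) f L : NoDup L -> (forall x, C x -> In x L) ->
  set_sum C f = lsum (fun x => if dec (C x) then f x else 0) L.
Proof. intros N H. rewrite (set_sum_filter C f L N H). apply lsum_filter_ind. Qed.

Lemma dtf_cases {A} (p : tformula A * tformula A) : (fst p = snd p /\ dtf p = 0) \/ (fst p <> snd p /\ dtf p = 1).
Proof. unfold dtf. destruct excluded_middle_informative; auto. Qed.

Lemma lsum_minus {T} (f g : T -> R) L : lsum (fun x => f x - g x) L = lsum f L - lsum g L.
Proof. induction L as [|a L IH]. unfold lsum; simpl; lra. rewrite !lsum_cons, IH. lra. Qed.

Lemma lsum_opp {T} (f : T -> R) L : lsum (fun x => - f x) L = - lsum f L.
Proof. induction L as [|a L IH]. unfold lsum; simpl; lra. rewrite !lsum_cons, IH. lra. Qed.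

Lemma Dtdf_nonneg {A} (x y : tdformula A) : 0 <= Dtdf x y.
Proof. unfold Dtdf. apply Rinf_ge; [|lra]. intros r [w [[[Hn _] _] Er]]. subst.
  apply set_sum_nonneg. intros p _. apply Rmult_le_pos; auto. destruct (dtf_cases p) as [[_ E]|[_ E]]; rewrite E; lra. Qed.

Lemma cost_le1 {A} (w : tformula A * tformula A -> R) : is_fdist w ->
  set_sum (fun p => w p <> 0) (fun p => w p * dtf p) <= 1.
Proof. intros F. assert (F' := F). destruct F' as [Hn [L [N [HL S]]]].
  rewrite (set_sum_ind _ _ L N HL). change (lsum w L = 1) in S. rewrite <- S.
  apply lsum_le. intros p _. destruct (dec (w p <> 0)). destruct (dtf_cases p) as [[_ E]|[_ E]]; rewrite E; specialize (Hn p); lra.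
  apply Hn. Qed.

Lemma Dtdf_le1 {A} (x y : tdformula A) : Dtdf x y <= 1.
Proof. unfold Dtdf. apply Rinf_le_bound. intros r [w [[F _] Er]]. subst. apply cost_le1; auto. Qed.

Lemma Dtdf_self {A} (x : tdformula A) : is_tdf x -> Dtdf x x = 0.
Proof. intros Fx. apply Rle_antisym; [|apply Dtdf_nonneg].
  set (w0 := fun p : tformula A * tformula A => if dec (fst p = snd p) then x (fst p) else 0).
  destruct Fx as [Hn [L [N [HL S]]]].
  assert (Hw : forall p, w0 p <> 0 -> fst p = snd p /\ x (fst p) <> 0).
  { intros p H. unfold w0 in H. destruct (dec (fst p = snd p)) eqn:E; [|lra]. apply (proj1 (dec_true _)) in E; auto. }
  assert (Hd : forall P, w0 (P, P) = x P).
  { intros P. unfold w0; simpl. destruct (dec (P = P)) eqn:E; auto. apply (proj1 (dec_false _)) in E; contradiction. }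
  assert (Marg : forall (sel : tformula A * tformula A -> tformula A), (forall P, sel (P, P) = P) ->
             (forall p, w0 p <> 0 -> sel p = fst p) ->
             forall Phi, set_sum (fun p => sel p = Phi /\ w0 p <> 0) w0 = x Phi).
  { intros sel Hs1 Hs2 Phi. destruct (Req_dec (x Phi) 0) as [E|E].
    - rewrite E. apply set_sum_zero. intros p [H1 H2]. exfalso. destruct (Hw p H2) as [H3 H4].
      rewrite Hs2 in H1 by auto. subst. contradiction.
    - rewrite (set_sum_list _ _ [(Phi, Phi)]). rewrite lsum_cons, lsum_nil, Hd; lra.
      repeat constructor; auto. intros p. split.
      + intros [H|[]]. subst. rewrite Hs1, Hd. auto.
      + intros [H1 H2]. destruct (Hw p H2) as [H3 _]. rewrite Hs2 in H1 by auto. left. destruct p; simpl in *; subst; auto. }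
  unfold Dtdf. apply (Rinf_le _ _ 0).
  - exists w0. split.
    + split; [|split].
      * split. intros p; unfold w0; destruct (dec _); auto; lra.
        exists (map (fun P => (P, P)) L). split. apply FinFun.Injective_map_NoDup; auto. intros a b E; inversion E; auto.
        split. intros p H. destruct (Hw p H) as [H1 H2]. destruct p as [p1 p2]; simpl in *; subst. apply in_map_iff; exists p2; auto.
        change (lsum w0 (map (fun P => (P, P)) L) = 1). rewrite lsum_map.
        rewrite (lsum_ext _ x) by (intros; apply Hd). auto.
      * apply Marg; auto.
      * apply Marg; auto. intros p H; symmetry; apply Hw; auto.
    + symmetry. apply set_sum_zero. intros p H. destruct (Hw p H) as [H1 _].
      destruct (dtf_cases p) as [[_ E]|[E _]]. rewrite E; lra. contradiction.
  - intros r [w [[[Hn' _] _] Er]]. subst.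
    apply set_sum_nonneg. intros p _. apply Rmult_le_pos; auto. destruct (dtf_cases p) as [[_ E]|[_ E]]; rewrite E; lra. Qed.

Lemma pw_bound {B} (a b Phi : B) (w dd : R) : 0 <= w -> ((a = b /\ dd = 0) \/ (a <> b /\ dd = 1)) ->
  (if dec (a = Phi /\ w <> 0) then w else 0) - (if dec (b = Phi /\ w <> 0) then w else 0) <= (if dec (w <> 0) then w * dd else 0) /\
  - (if dec (w <> 0) then w * dd else 0) <= (if dec (a = Phi /\ w <> 0) then w else 0) - (if dec (b = Phi /\ w <> 0) then w else 0).
Proof. intros Hw Hd.
  destruct (dec (a = Phi /\ w <> 0)) eqn:E1; [apply (proj1 (dec_true _)) in E1|apply (proj1 (dec_false _)) in E1];
  destruct (dec (b = Phi /\ w <> 0)) eqn:E2; [apply (proj1 (dec_true _)) in E2|apply (proj1 (dec_false _)) in E2|apply (proj1 (dec_true _)) in E2|apply (proj1 (dec_false _)) in E2];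
  destruct (dec (w <> 0)) eqn:E3; [apply (proj1 (dec_true _)) in E3|apply (proj1 (dec_false _)) in E3|apply (proj1 (dec_true _)) in E3|apply (proj1 (dec_false _)) in E3|apply (proj1 (dec_true _)) in E3|apply (proj1 (dec_false _)) in E3|apply (proj1 (dec_true _)) in E3|apply (proj1 (dec_false _)) in E3];
  destruct Hd as [[Ha Hd]|[Ha Hd]]; subst dd; try (split; lra);
  try (exfalso; intuition congruence); try (exfalso; apply E3; intros Q; apply E2; intuition congruence).
  all: try (exfalso; apply E2; intuition congruence); try (exfalso; apply E1; intuition congruence).
  all: try (split; nra).
Qed.

Lemma Dtdf_bound {A} (x y : tdformula A) Phi : is_tdf x -> is_tdf y -> Rabs (x Phi - y Phi) <= Dtdf x y.
Proof. intros Fx Fy. unfold Dtdf. apply Rinf_ge.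
  - intros r [w [[Fw [M1 M2]] Er]]. subst. destruct Fw as [Hn [L [N [HL S]]]].
    rewrite <- (M1 Phi), <- (M2 Phi).
    rewrite !(set_sum_ind _ _ L N) by (intros p Hp; apply HL; tauto).
    rewrite <- !lsum_minus. apply Rabs_le. split.
    + rewrite <- lsum_opp. apply lsum_le. intros p _. apply (pw_bound (fst p) (snd p) Phi (w p) (dtf p)); auto.
      apply dtf_cases.
    + apply lsum_le. intros p _. apply (pw_bound (fst p) (snd p) Phi (w p) (dtf p)); auto.
      apply dtf_cases.
  - assert (0 <= x Phi) by (apply Fx). assert (0 <= y Phi) by (apply Fy).
    assert (x Phi <= 1) by (apply fdist_le1; auto). assert (y Phi <= 1) by (apply fdist_le1; auto).
    apply Rabs_le. lra.
Qed.


Lemma eps_fold {T} (g : T -> R) L : (forall x, In x L -> 0 < g x) ->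
  let e := fold_right (fun x acc => Rmin (g x) acc) 1 L in
  0 < e /\ e <= 1 /\ forall x, In x L -> e <= g x.
Proof. induction L as [|a L IH]; intros H e; simpl in e.
  - unfold e. repeat split; try lra. intros x [].
  - destruct IH as [I1 [I2 I3]]. intros; apply H; right; auto.
    set (e' := fold_right (fun x acc => Rmin (g x) acc) 1 L) in *. unfold e.
    assert (Rmin (g a) e' <= g a) by apply Rmin_l. assert (Rmin (g a) e' <= e') by apply Rmin_r.
    repeat split.
    + apply Rmin_glb_lt; auto. apply H; left; auto.
    + lra.
    + intros x [E|Hx]. subst; auto. specialize (I3 x Hx). lra. Qed.

Lemma equiv_PM {S A} (st : trans S A) s t (Zs : resolution st s) (Zt : resolution st t) :
  finite_proc st s -> finite_proc st t ->
  ((forall al, Pr_trace Zs al = Pr_trace Zt al) <-> (forall al, PMf (rstep Zs) (rinit Zs) al = PMf (rstep Zt) (rinit Zt) al)).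
Proof. intros Fs Ft. destruct (res_bounded st s Zs Fs) as [N1 B1]. destruct (res_bounded st t Zt Ft) as [N2 B2].
  rewrite <- (PT_PM_equiv _ _ _ _ N1 N2); auto using res_det, res_pts.
  split; intros H al; specialize (H al); rewrite !PrT in *; auto. Qed.

Lemma dir1 {S A} (st : trans S A) s t : is_PTS st -> image_finite st -> finite_proc st s -> finite_proc st t ->
  Rsup (fun r => exists x, Lset st s x /\ r = Rinf (fun r' => exists y, Lset st t y /\ r' = Dtdf x y) 1) 0 <= 0 ->
  forall Zs : resolution st s, exists Zt : resolution st t, forall al, Pr_trace Zs al = Pr_trace Zt al.
Proof. intros Hp Hi Fs Ft Hsup Zs.
  set (Psi := Psi_of Zs). assert (LPsi : Lset st s Psi) by (apply Psi_in_L; auto).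
  assert (Fpsi := proj1 LPsi). assert (Fpsi' := Fpsi). destruct Fpsi' as [Hn [Lp [Np [HLp Sp]]]].
  set (SP := filter (fun Phi => dec (0 < Psi Phi)) Lp).
  assert (HSP : forall Phi, In Phi SP <-> 0 < Psi Phi).
  { intros Phi. unfold SP. rewrite filter_In, dec_true. split; [tauto|]. intros; split; auto. apply HLp; lra. }
  set (g := fun Phi => Rmin (Psi Phi) (mingap (Psi Phi) (Vals st (ftr Phi) t))).
  destruct (eps_fold g SP) as [E1 [E2 E3]].
  { intros Phi HPhi. apply HSP in HPhi. unfold g. apply Rmin_glb_lt; auto. apply mingap_pos. }
  set (eps := fold_right (fun x acc => Rmin (g x) acc) 1 SP) in *.
  set (e := Rinf (fun r' => exists y, Lset st t y /\ r' = Dtdf Psi y) 1).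
  assert (He : e <= 0).
  { eapply Rle_trans; [|exact Hsup]. apply (Rsup_ge _ _ _ 1). exists Psi; split; auto.
    intros r [x [_ Er]]. subst. apply Rinf_le_bound. intros r [y [_ Er]]; subst. apply Dtdf_le1. }
  destruct (Rinf_lt (fun r' => exists y, Lset st t y /\ r' = Dtdf Psi y) 1 eps) as [dv [[y [Ly Edv]] Hdv]]. unfold e in He; lra. auto. subst dv.
  destruct (L_char st t y Ly) as [Zt HZt]. exists Zt.
  apply (equiv_PM st s t Zs Zt Fs Ft).
  assert (Key : forall Phi, In Phi SP -> PMf (rstep Zt) (rinit Zt) (ftr Phi) = Psi Phi).
  { intros Phi HPhi. assert (Hb := Dtdf_bound Psi y Phi Fpsi (proj1 Ly)).
    assert (Hg := E3 Phi HPhi). unfold g in Hg.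
    assert (G1 := Rmin_l (Psi Phi) (mingap (Psi Phi) (Vals st (ftr Phi) t))).
    assert (G2 := Rmin_r (Psi Phi) (mingap (Psi Phi) (Vals st (ftr Phi) t))).
    assert (Ha : Rabs (Psi Phi - y Phi) < eps) by lra.
    assert (Hy : 0 < y Phi). { apply Rabs_def2 in Ha. lra. }
    rewrite HZt by auto. apply mingap_eq with (W := Vals st (ftr Phi) t).
    - rewrite <- HZt by auto. assert (HV := Vals_In st t Zt Hp Hi (ftr Phi) (rinit Zt)). rewrite (@r_corr_init _ _ _ _ Zt) in HV. exact HV.
    - rewrite Rabs_minus_sym. lra. }
  intros al. destruct (Rlt_dec 0 (Psi (fof al))) as [Pos|NPos].
  - apply HSP in Pos. rewrite <- (ftr_fof al). rewrite (Key _ Pos). reflexivity.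
  - assert (Z0 : PMf (rstep Zs) (rinit Zs) al = 0).
    { assert (H0 := Hn (fof al)). unfold Psi, Psi_of in H0, NPos. rewrite ftr_fof in H0, NPos. lra. }
    rewrite Z0. assert (H0 := PMf_nonneg _ (res_pts st t Zt) al (rinit Zt)).
    destruct (Req_dec (PMf (rstep Zt) (rinit Zt) al) 0) as [Q|Q]; auto. exfalso.
    destruct (res_bounded st t Zt Ft) as [N2 B2].
    assert (Hle := PM_le1 (rstep Zt) (rinit Zt) N2 (al :: map ftr SP) (res_det st t Zt) (res_pts st t Zt) B2).
    assert (Sum1 : lsum Psi SP = 1).
    { unfold SP. rewrite lsum_filter_zero. exact Sp. intros x _ Hx. apply (proj1 (dec_false _)) in Hx.
      specialize (Hn x). lra. }
    rewrite lsum_cons, lsum_map in Hle.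
    rewrite (lsum_ext _ Psi) in Hle by (intros; apply Key; auto). rewrite Sum1 in Hle.
    assert (0 < PMf (rstep Zt) (rinit Zt) al) by lra.
    assert (Hle' : PMf (rstep Zt) (rinit Zt) al + 1 <= 1).
    { apply Hle. constructor.
      - intros Hin. apply in_map_iff in Hin. destruct Hin as [Phi [E HPhi]]. apply HSP in HPhi.
        apply NPos. rewrite <- E, fof_ftr. auto.
      - apply FinFun.Injective_map_NoDup. apply ftr_inj. unfold SP. apply NoDup_filter; auto. }
    lra.
Qed.

Lemma dir2 {S A} (st : trans S A) s t : finite_proc st s -> finite_proc st t ->
  (forall Zs : resolution st s, exists Zt : resolution st t, forall al, Pr_trace Zs al = Pr_trace Zt al) ->
  Rsup (fun r => exists x, Lset st s x /\ r = Rinf (fun r' => exists y, Lset st t y /\ r' = Dtdf x y) 1) 0 = 0.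
Proof. intros Fs Ft H. apply Rsup_zero. intros r [x [[Fx [Zs HZs]] Er]]. subst r.
  destruct (H Zs) as [Zt HZt]. assert (HZ := proj1 (equiv_PM st s t Zs Zt Fs Ft) HZt). clear HZt. rename HZ into HZt.
  apply Rle_antisym.
  - apply (Rinf_le _ _ 0). exists x. split. split; auto. exists Zt. intros Phi HPhi.
    rewrite PMset, <- HZt, <- PMset. auto. symmetry; apply Dtdf_self; auto.
    intros r' [y [_ E]]; subst; apply Dtdf_nonneg.
  - apply Rinf_ge. intros r' [y [_ E]]; subst; apply Dtdf_nonneg. lra. Qed.

Theorem theorem16 (S A : Type) (st : trans S A)
  (Hpts : is_PTS st) (Himf : image_finite st)
  (Hfin : forall s : S, finite_proc st s) :
  forall s t : S, DL st s t = 0 <-> ptrace_equiv st s t.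
Proof. intros s t. unfold DL, Hlift. split.
  - intros H. assert (H1 := Rmax_l
      (Rsup (fun r => exists x, Lset st s x /\ r = Rinf (fun r' => exists y, Lset st t y /\ r' = Dtdf x y) 1) 0)
      (Rsup (fun r => exists y, Lset st t y /\ r = Rinf (fun r' => exists x, Lset st s x /\ r' = Dtdf y x) 1) 0)).
    assert (H2 := Rmax_r
      (Rsup (fun r => exists x, Lset st s x /\ r = Rinf (fun r' => exists y, Lset st t y /\ r' = Dtdf x y) 1) 0)
      (Rsup (fun r => exists y, Lset st t y /\ r = Rinf (fun r' => exists x, Lset st s x /\ r' = Dtdf y x) 1) 0)).
    split; apply dir1; auto; lra.
  - intros [H1 H2]. rewrite (dir2 st s t), (dir2 st t s); auto. apply Rmax_left; lra.
Qed.
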